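(* Let $m,n\geq 2$ be two distinct integers and $k\geq 2$. Then $$\Phi_k (P_m \square P_n)=\frac{1}{4}\left( k^{mn}-k^{m\lceil \frac{n}{2}\rceil}-k^{n\lceil \frac{m}{2}\rceil} -k^{\lceil \frac{mn}{2}\rceil} +2 k^{\lceil \frac{m}{2}\rceil\lceil \frac{n}{2}\rceil}\right).$$
   Context: $P_n$ is the path on $n$ vertices and $\square$ is the Cartesian product ($V(G\square H)=V(G)\times V(H)$, $(g,h)\sim(g',h')$ iff $g=g'$ and $hh'\in E(H)$, or $gg'\in E(G)$ and $h=h'$). A vertex coloring is distinguishing if the identity is the only automorphism preserving it. Two colorings $c_1,c_2$ of a graph $G$ are equivalent if there is an automorphism $\alpha$ of $G$ with $c_1(v)=c_2(\alpha(v))$ for all $v\in V(G)$. $\Phi_k(G)$ denotes the number of non-equivalent distinguishing vertex colorings of $G$ with colors from $\{1,\ldots,k\}$ (not all colors need be used). *)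

(* Defs.v *)
From HB Require Import structures.
From mathcomp Require Import all_boot all_order all_algebra all_fingroup.
Set Implicit Arguments. Unset Strict Implicit. Unset Printing Implicit Defensive.

Definition path_adj (n : nat) : rel 'I_n :=
  fun i j => (i.+1 == j :> nat) || (j.+1 == i :> nat).

Definition cart_adj (V W : finType) (eG : rel V) (eH : rel W) : rel (V * W) :=
  fun x y => ((x.1 == y.1) && eH x.2 y.2) || (eG x.1 y.1 && (x.2 == y.2)).

Definition grid_adj (m n : nat) : rel ('I_m * 'I_n) :=
  cart_adj (@path_adj m) (@path_adj n).

Definition is_aut (V : finType) (e : rel V) (s : {perm V}) : bool :=
  [forall x, forall y, e (s x) (s y) == e x y].

(* Colorings with colors from {1,..,k}, represented as 'I_k. *)
Definition coloring (V : finType) (k : nat) := {ffun V -> 'I_k}.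

Definition distinguishing (V : finType) (e : rel V) (k : nat) (c : coloring V k) : bool :=
  [forall s : {perm V}, (is_aut e s && [forall v, c (s v) == c v]) ==> (s == 1%g)].

Definition equiv_col (V : finType) (e : rel V) (k : nat) (c1 c2 : coloring V k) : bool :=
  [exists a : {perm V}, is_aut e a && [forall v, c1 v == c2 (a v)]].

Definition Phi (V : finType) (e : rel V) (k : nat) : nat :=
  #|[set [set c2 : coloring V k | equiv_col e c1 c2]
     | c1 in [set c : coloring V k | distinguishing e c]]|.

Definition ceil2 (n : nat) : nat := (n + 1) %/ 2.

(* Main.v *)
Set Warnings "-notation-overridden,-ambiguous-paths".
Require Import Defs.
From mathcomp Require Import all_boot all_order all_algebra all_fingroup.
From mathcomp Require Import zify lra.
Set Implicit Arguments. Unset Strict Implicit. Unset Printing Implicit Defensive.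


Definition rv (b : bool) N (i : 'I_N) : 'I_N := if b then rev_ord i else i.
Definition g m n (a b : bool) (x : 'I_m * 'I_n) : 'I_m * 'I_n := (rv a x.1, rv b x.2).

Lemma rvK b N : involutive (@rv b N).
Proof. by case: b => //= i; rewrite /rv rev_ordK. Qed.
Lemma rv_inj b N : injective (@rv b N).
Proof. apply: (can_inj (g:=@rv b N)); exact: rvK. Qed.
Lemma val_rv b N (i : 'I_N) : val (rv b i) = if b then N - i.+1 else i.
Proof. by case: b. Qed.
Lemma gK m n a b : involutive (@g m n a b).
Proof. by case=> x y; rewrite /g /= !rvK. Qed.
Lemma g_inj m n a b : injective (@g m n a b).
Proof. apply: (can_inj (g:=@g m n a b)); exact: gK. Qed.
Lemma gM m n a b a' b' (x : 'I_m * 'I_n) :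
  g a b (g a' b' x) = g (a (+) a') (b (+) b') x.
Proof. by case: x => x y; case: a; case: a'; case: b; case: b'; rewrite /g /rv /= ?rev_ordK. Qed.
Lemma g_comm m n a b a' b' (x : 'I_m * 'I_n) :
  g a b (g a' b' x) = g a' b' (g a b x).
Proof. by rewrite !gM addbC [b (+) _]addbC. Qed.
Lemma g00 m n (x : 'I_m * 'I_n) : g false false x = x.
Proof. by case: x. Qed.

Definition ad (a b : nat) := (a - b) + (b - a).
Definition dist m n (x y : 'I_m * 'I_n) := ad x.1 y.1 + ad x.2 y.2.

Section Grid.
Variables m n : nat.
Notation V := ('I_m * 'I_n)%type.
Notation e := (@grid_adj m n).

Lemma adj_dist (x y z : V) : e y z -> dist x y <= (dist x z).+1.
Proof.
case: x y z => [x1 x2] [y1 y2] [z1 z2].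
rewrite /grid_adj /cart_adj /path_adj /dist /ad /=.
case/orP => [/andP [/eqP e1 /orP [] /eqP h] | /andP [/orP [] /eqP h /eqP e2]];
 rewrite ?e1 ?e2; lia.
Qed.

Lemma dist0 (x y : V) : dist x y = 0 -> x = y.
Proof.
case: x y => [x1 x2] [y1 y2]; rewrite /dist /ad /= => h.
by congr pair; apply: val_inj => /=; lia.
Qed.

Lemma step (x y : V) : 0 < dist x y -> exists z, e y z && (dist x z == (dist x y).-1).
Proof.
case: x y => [x1 x2] [y1 y2] /= hd.
have hx1 := ltn_ord x1; have hx2 := ltn_ord x2; have hy1 := ltn_ord y1; have hy2 := ltn_ord y2.
case: (ltngtP y1 x1) => [lt|gt|eq1].
- have p : y1.+1 < m by lia.
  exists (Ordinal p, y2); apply/andP; split.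
    by rewrite /grid_adj /cart_adj /path_adj /= !eqxx orbT.
  by apply/eqP; move: hd; rewrite /dist /ad /=; lia.
- have p : y1.-1 < m by lia.
  exists (Ordinal p, y2); apply/andP; split.
    apply/orP; right; rewrite eqxx andbT; apply/orP; right; apply/eqP => /=; lia.
  by apply/eqP; move: hd; rewrite /dist /ad /=; lia.
case: (ltngtP y2 x2) => [lt|gt|eq2].
- have p : y2.+1 < n by lia.
  exists (y1, Ordinal p); apply/andP; split.
    by rewrite /grid_adj /cart_adj /path_adj /= !eqxx.
  by apply/eqP; move: hd; rewrite /dist /ad /=; lia.
- have p : y2.-1 < n by lia.
  exists (y1, Ordinal p); apply/andP; split.
    apply/orP; left; rewrite eqxx /=; apply/orP; right; apply/eqP => /=; lia.
  by apply/eqP; move: hd; rewrite /dist /ad /=; lia.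
by move: hd; rewrite /dist /ad /=; lia.
Qed.

Lemma is_autP (s : {perm V}) : reflect (forall x y, e (s x) (s y) = e x y) (is_aut e s).
Proof.
apply: (iffP forallP) => [h x y|h x]; first exact/eqP/(forallP (h x)).
by apply/forallP => y; rewrite h.
Qed.

Lemma aut_dist_le (s : {perm V}) : is_aut e s -> forall d x y, dist x y <= d -> dist (s x) (s y) <= d.
Proof.
move/is_autP => ha; elim=> [|d IH] x y h.
  have -> : y = x by apply/esym/dist0; lia.
  by rewrite /dist /ad; lia.
case: (posnP (dist x y)) => [/dist0 ->|pos]; first by rewrite /dist /ad; lia.
have [z /andP [adj /eqP dz]] := step pos.
have := IH x z (ltac:(lia)).
have adj' : e (s y) (s z) by rewrite ha.
have := adj_dist (s x) adj'. lia.
Qed.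

Lemma aut_dist (s : {perm V}) : is_aut e s -> forall x y, dist (s x) (s y) = dist x y.
Proof.
move=> ha x y; apply/eqP; rewrite eqn_leq; apply/andP; split.
  exact: aut_dist_le.
have hi : is_aut e s^-1 by apply/is_autP => u v; rewrite -(is_autP _ ha) !permKV.
by have := aut_dist_le hi (leqnn (dist (s x) (s y))); rewrite !permK.
Qed.

End Grid.


Lemma ad_lt a b M : a < M -> b < M -> ad a b <= M.-1.
Proof. rewrite /ad; lia. Qed.

Lemma sum_max a b A B : a <= A -> b <= B -> a + b = A + B -> a = A /\ b = B.
Proof. lia. Qed.

Lemma corner_ad a b M : a < M -> b < M -> ad a b = M.-1 -> a = 0 \/ a = M.-1.
Proof. rewrite /ad; lia. Qed.

Section Char.
Variables m n : nat.
Hypotheses (hm : 1 < m) (hn : 1 < n) (hmn : m != n).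
Notation V := ('I_m * 'I_n)%type.
Notation e := (@grid_adj m n).

Lemma aut_char (s : {perm V}) : is_aut e s -> exists a b, forall x, s x = g a b x.
Proof.
move=> ha; have hd := aut_dist ha.
have hmn' : m <> n by apply/eqP.
have hm0 : 0 < m by lia. have hn0 : 0 < n by lia.
have hm1 : m.-1 < m by lia. have hn1 : n.-1 < n by lia.
pose o1 : 'I_m := Ordinal hm0. pose o2 : 'I_n := Ordinal hn0.
pose t1 : 'I_m := Ordinal hm1. pose t2 : 'I_n := Ordinal hn1.
have h1 := hd (o1,o2) (t1,t2). have h2 := hd (t1,o2) (o1,t2).
have h3 := hd (o1,o2) (t1,o2).
have h4 := fun x => hd (o1,o2) x. have h5 := fun x => hd (t1,o2) x.
move: h1 h2 h3 h4 h5.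
case: (s (o1,o2)) => [c1 c2]. case: (s (t1,o2)) => [q1 q2].
case: (s (t1,t2)) => [r1 r2]. case: (s (o1,t2)) => [u1 u2].
rewrite /dist /= => h1 h2 h3 h4 h5.
have e0 : ad 0 m.-1 = m.-1 by rewrite /ad; lia.
have e0' : ad 0 n.-1 = n.-1 by rewrite /ad; lia.
have e1 : ad m.-1 0 = m.-1 by rewrite /ad; lia.
have e00 : ad 0 0 = 0 by [].
rewrite e0 e0' in h1; rewrite e1 e0' in h2; rewrite e0 e00 addn0 in h3.
have [k1 k2] := sum_max (ad_lt (ltn_ord c1) (ltn_ord r1)) (ad_lt (ltn_ord c2) (ltn_ord r2)) h1.
have [k3 k4] := sum_max (ad_lt (ltn_ord q1) (ltn_ord u1)) (ad_lt (ltn_ord q2) (ltn_ord u2)) h2.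
have C1 := corner_ad (ltn_ord c1) (ltn_ord r1) k1.
have C2 := corner_ad (ltn_ord c2) (ltn_ord r2) k2.
have Q1 := corner_ad (ltn_ord q1) (ltn_ord u1) k3.
have Q2 := corner_ad (ltn_ord q2) (ltn_ord u2) k4.
have {h3} [Eq1 Eq2] : q1 = m.-1 - c1 :> nat /\ q2 = c2 :> nat.
  move: h3; rewrite /ad.
  by case: C1 => ->; case: C2 => ->; case: Q1 => ->; case: Q2 => ->; lia.
exists (0 < c1), (0 < c2) => x.
move: (h4 x) (h5 x); case: (s x) => [y1 y2]; case: x => [x1 x2] /=.
have := ltn_ord x1; have := ltn_ord x2; have := ltn_ord y1; have := ltn_ord y2.
move=> l1 l2 l3 l4.
have a1 : ad 0 y1 = y1 by rewrite /ad; lia.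
have a2 : ad m.-1 y1 = m.-1 - y1 by rewrite /ad; lia.
have a3 : ad 0 y2 = y2 by rewrite /ad; lia.
have a4 : ad n.-1 y2 = n.-1 - y2 by rewrite /ad; lia.
have a5 : ad 0 x1 = x1 by rewrite /ad; lia.
have a6 : ad m.-1 x1 = m.-1 - x1 by rewrite /ad; lia.
have a7 : ad 0 x2 = x2 by rewrite /ad; lia.
have hp1 : (0 < m.-1) = true by lia.
have hp2 : (0 < n.-1) = true by lia.
rewrite Eq1 Eq2 a5 a6 a7.
move=> H4 H5; rewrite /g /=; f_equal; apply: ord_inj; rewrite val_rv; move: H4 H5.
- case: C1 => -> /=; rewrite ?hp1 ?subn0 ?subnn ?a1 ?a2 => H4 H5; lia.
- case: C1 => -> /=; rewrite ?subn0 ?subnn ?a1 ?a2;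
  case: C2 => -> /=; rewrite ?hp2 ?a3 ?a4 => H4 H5; lia.
Qed.

End Char.


Lemma path_adj_rv b N (i j : 'I_N) : path_adj (rv b i) (rv b j) = path_adj i j.
Proof.
case: b => //=; rewrite /path_adj /=.
have := ltn_ord i; have := ltn_ord j => li lj.
by apply/orP/orP => -[] /eqP h; [right|left|right|left]; apply/eqP; lia.
Qed.

Lemma g_adj m n a b (x y : 'I_m * 'I_n) : grid_adj (g a b x) (g a b y) = grid_adj x y.
Proof.
by rewrite /grid_adj /cart_adj /= (inj_eq (@rv_inj a m)) (inj_eq (@rv_inj b n)) !path_adj_rv.
Qed.

Definition gp m n a b : {perm ('I_m * 'I_n)%type} := perm (@g_inj m n a b).

Lemma g_aut m n a b : is_aut (@grid_adj m n) (gp m n a b).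
Proof. by apply/is_autP => x y; rewrite !permE g_adj. Qed.

Definition fixedb m n k (c : coloring ('I_m * 'I_n)%type k) a b :=
  [forall v, c (g a b v) == c v].

Section Count.
Variables m n k : nat.
Hypotheses (hm : 1 < m) (hn : 1 < n) (hmn : m != n).
Notation V := ('I_m * 'I_n)%type.
Notation e := (@grid_adj m n).
Notation col := (coloring V k).

Lemma g_nontriv a b : a || b -> exists v : V, g a b v != v.
Proof.
have hm0 : 0 < m by lia. have hn0 : 0 < n by lia.
move=> ab; exists (Ordinal hm0, Ordinal hn0); rewrite /g /=.
apply/negP => /eqP [] /(congr1 val) h1 /(congr1 val) h2.
move: ab h1 h2; rewrite !val_rv /=; case: a; case: b => //= _; lia.
Qed.

Lemma distP (c : col) : distinguishing e c =
  ~~ fixedb c true false && ~~ fixedb c false true && ~~ fixedb c true true.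
Proof.
have key : forall a b, a || b -> distinguishing e c -> fixedb c a b -> False.
  move=> a b ab /forallP /(_ (gp m n a b)); rewrite g_aut /=.
  have -> : [forall v, c (gp m n a b v) == c v] = fixedb c a b.
    by apply: eq_forallb => v; rewrite permE.
  move=> H F; move: H; rewrite F => /eqP hs.
  have [v /eqP] := g_nontriv ab; apply.
  by rewrite -(permE (@g_inj m n a b)) -/(gp m n a b) hs perm1.
apply/idP/idP.
  move=> D; apply/andP; split; [apply/andP; split|];
  apply/negP; exact: key D.
move=> /andP [/andP [n10 n01] n11]; apply/forallP => s; apply/implyP.
move=> /andP [aut /forallP hc]; have [a [b hs]] := aut_char hm hn hmn aut.
have fx : fixedb c a b by apply/forallP => v; rewrite -hs; exact: hc.
move: fx n10 n01 n11; case: a hs; case: b => hs fx; rewrite ?fx //.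
by move=> _ _ _; apply/eqP/permP => v; rewrite hs perm1 g00.
Qed.

End Count.


Section Classes.
Variables m n k : nat.
Hypotheses (hm : 1 < m) (hn : 1 < n) (hmn : m != n).
Notation V := ('I_m * 'I_n)%type.
Notation e := (@grid_adj m n).
Notation col := (coloring V k).

Definition cls (c : col) := [set c2 : col | equiv_col e c c2].
Definition gc (c : col) a b : col := [ffun v => c (g a b v)].

Lemma equivP (c1 c2 : col) : equiv_col e c1 c2 =
  [exists a, exists b, [forall v, c1 v == c2 (g a b v)]].
Proof.
apply/existsP/existsP.
  case=> s /andP [aut /forallP h]; have [a [b hs]] := aut_char hm hn hmn aut.
  exists a; apply/existsP; exists b; apply/forallP => v; rewrite -hs; exact: h.
case=> a /existsP [b /forallP h]; exists (gp m n a b); rewrite g_aut /=.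
by apply/forallP => v; rewrite permE.
Qed.

Lemma clsE (c c2 : col) : (c2 \in cls c) = [exists a, exists b, c2 == gc c a b].
Proof.
rewrite inE equivP; apply/existsP/existsP => -[a /existsP [b h]]; exists a;
  apply/existsP; exists b.
  apply/eqP/ffunP => v; rewrite ffunE.
  by rewrite (eqP (forallP h (g a b v))) gK.
by move/eqP: h => ->; apply/forallP => v; rewrite ffunE gK.
Qed.

Lemma fixed_gc (c : col) a b a' b' : fixedb (gc c a b) a' b' = fixedb c a' b'.
Proof.
apply/forallP/forallP => h v.
  by move: (h (g a b v)); rewrite !ffunE g_comm !gK.
by rewrite !ffunE g_comm (h (g a b v)).
Qed.

Lemma dist_gc (c : col) a b : distinguishing e c -> distinguishing e (gc c a b).
Proof. by rewrite !(distP hm hn hmn) !fixed_gc. Qed.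

Lemma gc_comp (c : col) a b a' b' : gc (gc c a b) a' b' = gc c (a (+) a') (b (+) b').
Proof. by apply/ffunP => v; rewrite !ffunE gM. Qed.

Lemma gc00 (c : col) : gc c false false = c.
Proof. by apply/ffunP => v; rewrite !ffunE g00. Qed.

Lemma cls_gc (c : col) a b : cls (gc c a b) = cls c.
Proof.
apply/setP => c2; rewrite !clsE; apply/existsP/existsP => -[a' /existsP [b' /eqP ->]].
  by exists (a (+) a'); apply/existsP; exists (b (+) b'); rewrite gc_comp.
by exists (a (+) a'); apply/existsP; exists (b (+) b'); rewrite gc_comp !addKb.
Qed.

Lemma dist_fixed (c : col) x y : distinguishing e c -> fixedb c x y -> ~~ x && ~~ y.
Proof.
rewrite (distP hm hn hmn) => /andP [/andP [n1 n2] n3].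
by move=> fx; move: fx n1 n2 n3; case: x; case: y => // fx; rewrite fx.
Qed.

Lemma gc_inj (c : col) : distinguishing e c -> injective (fun ab : bool * bool => gc c ab.1 ab.2).
Proof.
move=> D [a b] [a' b'] /= h.
have : fixedb c (a (+) a') (b (+) b').
  apply/forallP => v; rewrite -gM.
  by move/ffunP: h => /(_ (g a' b' v)); rewrite !ffunE gK => ->.
by move=> fx; move: (dist_fixed D fx); clear; case: a; case: a'; case: b; case: b'.
Qed.

Lemma card_cls (c : col) : distinguishing e c -> #|cls c| = 4.
Proof.
move=> D.
have -> : cls c = [set gc c ab.1 ab.2 | ab in [set: bool * bool]].
  apply/setP => c2; rewrite clsE; apply/existsP/imsetP.
    by case=> a /existsP [b /eqP ->]; exists (a, b).
  by case=> -[a b] _ ->; exists a; apply/existsP; exists b.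
by rewrite card_imset ?cardsT ?card_prod ?card_bool //; exact: gc_inj.
Qed.

Lemma Phi_eq : Phi e k * 4 = #|[set c : col | distinguishing e c]|.
Proof.
set D := [set c : col | distinguishing e c].
have -> : Phi e k = #|[set cls c | c in D]| by [].
transitivity (\sum_(X in [set cls c | c in D]) 4); first by rewrite sum_nat_const.
rewrite -sum1_card (@partition_big_imset _ _ _ _ _ cls).
apply: eq_bigr => X /imsetP [c0 c0D ->].
rewrite sum1dep_card -(card_cls (c := c0)); last by move: c0D; rewrite inE.
apply: eq_card => c; rewrite inE.
apply/idP/andP; last first.
  by case=> _ /eqP <-; rewrite clsE; apply/existsP; exists false; apply/existsP;
    exists false; rewrite gc00.
rewrite clsE => /existsP [a /existsP [b /eqP ->]]; split.
  by rewrite inE; apply: dist_gc; move: c0D; rewrite inE.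
by rewrite cls_gc.
Qed.

End Classes.


Lemma card_fold (V W : finType) k (p : V -> W) (s : W -> V) : cancel s p ->
  #|[set c : {ffun V -> 'I_k} | [forall x, c x == c (s (p x))]]| = k ^ #|W|.
Proof.
move=> sK.
have -> : [set c : {ffun V -> 'I_k} | [forall x, c x == c (s (p x))]] =
   [set [ffun x => (d : {ffun W -> 'I_k}) (p x)] | d in [set: {ffun W -> 'I_k}]].
  apply/setP => c; rewrite inE; apply/idP/imsetP.
    move/forallP => h; exists [ffun w => c (s w)]; first by rewrite inE.
    by apply/ffunP => x; rewrite !ffunE; exact/eqP/h.
  by case=> d _ ->; apply/forallP => x; rewrite !ffunE sK.
rewrite card_imset ?cardsT ?card_ffun ?card_ord //.
move=> d1 d2 /ffunP h; apply/ffunP => w; have := h (s w); by rewrite !ffunE sK.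
Qed.

Lemma fix_fold (V W : finType) k (f : V -> V) (p : V -> W) (s : W -> V) :
  (forall x, p (f x) = p x) -> (forall x, s (p x) = x \/ s (p x) = f x) ->
  [set c : {ffun V -> 'I_k} | [forall x, c (f x) == c x]] =
  [set c : {ffun V -> 'I_k} | [forall x, c x == c (s (p x))]].
Proof.
move=> pf sp; apply/setP => c; rewrite !inE; apply/forallP/forallP => h x.
  by case: (sp x) => ->; [|rewrite eq_sym (h x)].
by rewrite (eqP (h (f x))) pf eq_sym; exact: h.
Qed.

Lemma fix_fold2 (V W : finType) k (f1 f2 : V -> V) (p : V -> W) (s : W -> V) :
  (forall x, p (f1 x) = p x) -> (forall x, p (f2 x) = p x) ->
  (forall x, [\/ s (p x) = x, s (p x) = f1 x, s (p x) = f2 x | s (p x) = f1 (f2 x)]) ->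
  [set c : {ffun V -> 'I_k} | [forall x, c (f1 x) == c x]] :&:
  [set c : {ffun V -> 'I_k} | [forall x, c (f2 x) == c x]] =
  [set c : {ffun V -> 'I_k} | [forall x, c x == c (s (p x))]].
Proof.
move=> pf1 pf2 sp; apply/setP => c; rewrite !inE; apply/andP/forallP.
  case=> /forallP h1 /forallP h2 x.
  case: (sp x) => ->; rewrite ?(eqP (h1 _)) ?(eqP (h2 _)) //.
move=> h; split; apply/forallP => x.
  by rewrite (eqP (h (f1 x))) pf1 eq_sym; exact: h.
by rewrite (eqP (h (f2 x))) pf2 eq_sym; exact: h.
Qed.

Lemma ofold_lt N (i : 'I_N) : minn i (N - i.+1) < ceil2 N.
Proof. have := ltn_ord i; rewrite /ceil2; lia. Qed.
Definition ofold N (i : 'I_N) : 'I_(ceil2 N) := Ordinal (ofold_lt i).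
Lemma ounf_lt N (w : 'I_(ceil2 N)) : w < N.
Proof. have := ltn_ord w; rewrite /ceil2; lia. Qed.
Definition ounf N (w : 'I_(ceil2 N)) : 'I_N := Ordinal (ounf_lt w).
Lemma ofoldK N : cancel (@ounf N) (@ofold N).
Proof. move=> w; apply: val_inj => /=; have := ltn_ord w; rewrite /ceil2; lia. Qed.
Lemma ofold_rev N (i : 'I_N) : ofold (rev_ord i) = ofold i.
Proof. apply: val_inj => /=; have := ltn_ord i; lia. Qed.
Lemma ounf_ofold N (i : 'I_N) : ounf (ofold i) = i \/ ounf (ofold i) = rev_ord i.
Proof.
have := ltn_ord i => li.
by case: (leqP i (N - i.+1)) => h; [left|right]; apply: val_inj => /=; lia.
Qed.

Section Lin.
Variables m n : nat.
Hypothesis hn : 0 < n.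
Lemma lin_lt (x : 'I_m * 'I_n) : x.1 * n + x.2 < m * n.
Proof.
case: x => [i j] /=; have li := ltn_ord i; have lj := ltn_ord j.
apply: (@leq_trans (i.+1 * n)); first by rewrite mulSn addnC ltn_add2r.
by rewrite leq_mul2r li orbT.
Qed.
Definition lin (x : 'I_m * 'I_n) : 'I_(m * n) := Ordinal (lin_lt x).
Lemma unlin_lt1 (t : 'I_(m * n)) : t %/ n < m.
Proof. by rewrite ltn_divLR. Qed.
Lemma unlin_lt2 (t : 'I_(m * n)) : t %% n < n.
Proof. by rewrite ltn_pmod. Qed.
Definition unlin (t : 'I_(m * n)) : 'I_m * 'I_n :=
  (Ordinal (unlin_lt1 t), Ordinal (unlin_lt2 t)).
Lemma linK : cancel lin unlin.
Proof.
case=> i j; rewrite /unlin /lin; congr pair; apply: val_inj => /=.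
  by rewrite divnMDl // divn_small // addn0.
by rewrite modnMDl modn_small.
Qed.
Lemma unlinK : cancel unlin lin.
Proof. by move=> t; apply: val_inj => /=; rewrite -divn_eq. Qed.
Lemma lin_rot x : lin (g true true x) = rev_ord (lin x).
Proof.
case: x => [i j]; apply: val_inj => /=.
have li := ltn_ord i; have lj := ltn_ord j.
have h1 : i.+1 * n <= m * n by rewrite leq_mul2r li orbT.
rewrite mulnBl; move: h1; rewrite mulSn; lia.
Qed.
End Lin.


Section Final.
Variables m n k : nat.
Hypotheses (hm : 1 < m) (hn : 1 < n) (hmn : m != n).
Notation V := ('I_m * 'I_n)%type.
Notation e := (@grid_adj m n).
Notation col := (coloring V k).

Definition F a b := [set c : col | fixedb c a b].

Lemma cF10 : #|F true false| = k ^ (n * ceil2 m).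
Proof.
pose p := fun x : V => (ofold x.1, x.2).
pose s := fun w : 'I_(ceil2 m) * 'I_n => (ounf w.1, w.2).
have sK : cancel s p by case=> w1 w2; rewrite /p /s /= ofoldK.
rewrite /F /fixedb (@fix_fold _ _ k (g true false) p s).
- by rewrite (card_fold k sK) card_prod !card_ord mulnC.
- by case=> i j; rewrite /p /g /rv /= ofold_rev.
- by case=> i j; case: (ounf_ofold i) => h; [left|right]; rewrite /p /s /g /rv /= h.
Qed.

Lemma cF01 : #|F false true| = k ^ (m * ceil2 n).
Proof.
pose p := fun x : V => (x.1, ofold x.2).
pose s := fun w : 'I_m * 'I_(ceil2 n) => (w.1, ounf w.2).
have sK : cancel s p by case=> w1 w2; rewrite /p /s /= ofoldK.
rewrite /F /fixedb (@fix_fold _ _ k (g false true) p s).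
- by rewrite (card_fold k sK) card_prod !card_ord.
- by case=> i j; rewrite /p /g /rv /= ofold_rev.
- by case=> i j; case: (ounf_ofold j) => h; [left|right]; rewrite /p /s /g /rv /= h.
Qed.

Lemma cF11 : #|F true true| = k ^ ceil2 (m * n).
Proof.
have hn0 : 0 < n by lia.
pose p := fun x : V => ofold (lin x).
pose s := fun w : 'I_(ceil2 (m * n)) => unlin (m:=m) hn0 (ounf w).
have sK : cancel s p by move=> w; rewrite /p /s /= unlinK ofoldK.
rewrite /F /fixedb (@fix_fold _ _ k (g true true) p s).
- by rewrite (card_fold k sK) !card_ord.
- by move=> x; rewrite /p (lin_rot hn0) ofold_rev.
- move=> x; rewrite /p /s; case: (ounf_ofold (lin x)) => h; [left|right]; rewrite h.
    by rewrite (linK hn0).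
  by rewrite -(lin_rot hn0) (linK hn0).
Qed.

Lemma cFall : #|F true false :&: F false true| = k ^ (ceil2 m * ceil2 n).
Proof.
pose p := fun x : V => (ofold x.1, ofold x.2).
pose s := fun w : 'I_(ceil2 m) * 'I_(ceil2 n) => (ounf w.1, ounf w.2).
have sK : cancel s p by case=> w1 w2; rewrite /p /s /= !ofoldK.
rewrite /F /fixedb (@fix_fold2 _ _ k (g true false) (g false true) p s).
- by rewrite (card_fold k sK) card_prod !card_ord.
- by case=> i j; rewrite /p /g /rv /= ofold_rev.
- by case=> i j; rewrite /p /g /rv /= ofold_rev.
- case=> i j; rewrite /p /s; case: (ounf_ofold i) => h1; case: (ounf_ofold j) => h2;
   rewrite /g /rv /= h1 h2; [apply: Or41|apply: Or43|apply: Or42|apply: Or44]; by [].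
Qed.

Lemma fixed_comb (c : col) a b a' b' :
  fixedb c a b -> fixedb c a' b' -> fixedb c (a (+) a') (b (+) b').
Proof.
move=> /forallP h1 /forallP h2; apply/forallP => v.
by rewrite -gM (eqP (h1 _)) (eqP (h2 _)).
Qed.

Lemma I1 : F true false :&: F true true = F true false :&: F false true.
Proof.
apply/setP => c; rewrite !inE; apply/andP/andP => -[h1 h2]; split => //.
  exact: (fixed_comb h1 h2).
exact: (fixed_comb h1 h2).
Qed.

Lemma I2 : F false true :&: F true true = F true false :&: F false true.
Proof.
apply/setP => c; rewrite !inE; apply/andP/andP => -[h1 h2]; split => //.
- exact: (fixed_comb h1 h2).
- exact: (fixed_comb h1 h2).
Qed.

End Final.

Unset Implicit Arguments.
Import GRing.Theory.
Local Open Scope ring_scope.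

Theorem theorem5p1 (m n k : nat) :
  (2 <= m)%N -> (2 <= n)%N -> m != n -> (2 <= k)%N ->
  ((Phi (@grid_adj m n) k)%:R : rat) =
    4%:R^-1 * ((k ^ (m * n))%:R - (k ^ (m * ceil2 n))%:R
               - (k ^ (n * ceil2 m))%:R - (k ^ ceil2 (m * n))%:R
               + 2%:R * (k ^ (ceil2 m * ceil2 n))%:R).
Proof.
move=> hm hn hmn _.
set D := [set c : coloring ('I_m * 'I_n)%type k | distinguishing (@grid_adj m n) c].
have E4 : (Phi (@grid_adj m n) k * 4)%N = #|D| := Phi_eq k hm hn hmn.
have eD : D = ~: (F m n k true false :|: F m n k false true :|: F m n k true true).
  apply/setP => c; rewrite !inE (distP hm hn hmn) !negb_or.
  by [].
have E1 : (#|D| + #|F m n k true false :|: F m n k false true :|: F m n k true true|)%N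
          = (k ^ (m * n))%N.
  by rewrite eD addnC cardsC card_ffun card_prod !card_ord.
have E2 := cardsUI (F m n k true false :|: F m n k false true) (F m n k true true).
rewrite setIUl (I1 m n k) (I2 m n k) setUid in E2.
have E3 := cardsUI (F m n k true false) (F m n k false true).
rewrite (cF10 m n k) (cF01 m n k) (cFall m n k) in E3.
rewrite (cF11 k hm hn hmn) (cFall m n k) in E2.
move: E1 E2 E3 E4.
set U := #|_ :|: _ :|: _|.
set U2 := #|_ :|: _|.
move=> /(congr1 (fun x => x%:R : rat)) E1 /(congr1 (fun x => x%:R : rat)) E2.
move=> /(congr1 (fun x => x%:R : rat)) E3 /(congr1 (fun x => x%:R : rat)) E4.
rewrite !natrD !natrM in E1 E2 E3 E4.
lra.
Qed.
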